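(* Let $\Sigma,\Gamma$ be finite alphabets, each with at least two letters, and let $w \in \Sigma^*$. If there exist an injective morphism $h:\Sigma^*\to\Gamma^*$, a word $x\in\Gamma^*$ and a rational $r\ge 1$ such that $h(w) = x^r$ and $|x|_a = 1$ for some letter $a\in\Gamma$, then $\mathrm{E}_{\mathcal{I}}(w) = \infty$.
   Context: $|x|_a$ is the number of occurrences of the letter $a$ in $x$. For a nonempty word $v$ and integer $p\ge 0$, $v^{p/|v|}$ denotes the prefix of length $p$ of $vvv\cdots$. For a nonempty finite word $u$, $\mathrm{E}(u) = \sup\{ r \in \mathbb{Q} : u = v^r \text{ for some nonempty } v\}$. $\mathcal{I}$ is the set of injective morphisms $\Sigma^* \to \Gamma^*$ and $\mathrm{E}_{\mathcal{I}}(w) = \sup\{\mathrm{E}(h(w)) : h \in \mathcal{I}\}$. *)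

(* Defs.v *)
From mathcomp Require Import all_boot all_order all_algebra.
Set Implicit Arguments. Unset Strict Implicit. Unset Printing Implicit Defensive.
Import GRing.Theory Num.Theory.
Local Open Scope ring_scope.

Definition morph (S G : Type) (f : S -> seq G) (w : seq S) : seq G :=
  flatten (map f w).

(* v^{p/|v|}: the prefix of length p of v v v ... (for v nonempty). *)
Definition rpow (T : Type) (v : seq T) (p : nat) : seq T :=
  take p (flatten (nseq p v)).

Definition is_rpow (T : Type) (u v : seq T) (r : rat) : Prop :=
  (0 < size v)%N /\ r * (size v)%:R = (size u)%:R /\ u = rpow v (size u).

(* E_I(w) = infinity: the set of exponents E(h(w)), h injective morphism,
   is unbounded above. *)
Definition EI_infinite (S G : Type) (w : seq S) : Prop :=
  forall M : rat, exists (f : S -> seq G) (v : seq G) (r : rat),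
    injective (morph f) /\ is_rpow (morph f w) v r /\ M < r.

(* Main.v *)
Require Import Defs.
From mathcomp Require Import all_boot all_order all_algebra.
Import Order.TTheory GRing.Theory Num.Theory.
Local Open Scope ring_scope.
Local Close Scope ring_scope.

Section Aux.
Variable T : eqType.
Implicit Types s v y z t : seq T.

Lemma size_fn v q : size (flatten (nseq q v)) = q * size v.
Proof. by elim: q => //= q IH; rewrite size_cat IH mulSn. Qed.

Lemma fnD v a b : flatten (nseq (a + b) v) = flatten (nseq a v) ++ flatten (nseq b v).
Proof. by rewrite nseqD flatten_cat. Qed.

Lemma fnM v a b : flatten (nseq a (flatten (nseq b v))) = flatten (nseq (a * b) v).
Proof. by elim: a => //= a IH; rewrite IH mulSn fnD. Qed.

Lemma rpow_dec v q m : 0 < size v -> m < size v ->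
  rpow v (q * size v + m) = flatten (nseq q v) ++ take m v.
Proof.
move=> v0 mv; rewrite /rpow.
have qN : q <= q * size v + m by rewrite (leq_trans (leq_pmulr q v0)) ?leq_addr.
rewrite -{2}(subnKC qN) fnD take_cat size_fn ltnNge leq_addr /= addKn.
case: m mv qN => [|m] mv qN; first by rewrite !take0.
have : 0 < q * size v + m.+1 - q.
  by rewrite subn_gt0 addnS ltnS (leq_trans (leq_pmulr q v0)) // leq_addr.
case: (q * size v + m.+1 - q) => // N _ /=.
by rewrite take_cat mv.
Qed.

Lemma rot_lem y z k : y ++ flatten (nseq k (z ++ y)) = flatten (nseq k (y ++ z)) ++ y.
Proof.
elim: k => [|k IH] /=; first by rewrite cats0.
by rewrite -!catA -IH catA.
Qed.

End Aux.

Section Psi.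
Variable G : eqType.
Variable a : G.
Variable p : seq G.
Definition psi (c : G) : seq G := if c == a then a :: p else [:: c].

Lemma psi_head c : exists t, psi c = c :: t.
Proof. rewrite /psi; case: eqP => [->|_]; by eauto. Qed.

Lemma morph_cat (S : Type) (f : S -> seq G) s t : morph f (s ++ t) = morph f s ++ morph f t.
Proof. by rewrite /morph map_cat flatten_cat. Qed.

Lemma morph_psi_id s : a \notin s -> morph psi s = s.
Proof.
elim: s => //= c s IH; rewrite in_cons negb_or => /andP[ca /IH].
by rewrite /morph /= /psi eq_sym (negbTE ca) => ->.
Qed.

Lemma morph_fn s q : morph psi (flatten (nseq q s)) = flatten (nseq q (morph psi s)).
Proof. by elim: q => //= q IH; rewrite morph_cat IH. Qed.

Lemma psi_inj : injective (morph psi).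
Proof.
elim=> [|c1 s1 IH] [|c2 s2] //=; rewrite /morph /=.
- by case: (psi_head c2) => t ->.
- by case: (psi_head c1) => t ->.
have [t1 e1] := psi_head c1; have [t2 e2] := psi_head c2.
rewrite e1 e2 /= => -[ec]; subst c2; rewrite e1 in e2; case: e2 => <-.
by move/eqP; rewrite eqseq_cat // eqxx => /eqP /IH ->.
Qed.
End Psi.

Lemma morph_comp (S G : Type) (f : S -> seq G) (g : G -> seq G) w :
  morph g (morph f w) = morph (fun s => morph g (f s)) w.
Proof. by elim: w => //= c w IH; rewrite /morph /= map_cat flatten_cat; congr (_ ++ _). Qed.

Lemma mcons (S G : Type) (f : S -> seq G) c s : morph f (c :: s) = f c ++ morph f s.
Proof. by []. Qed.

Lemma rot2 (T : eqType) (y z : seq T) k :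
  y ++ flatten (nseq k (z ++ y)) ++ z = flatten (nseq k.+1 (y ++ z)).
Proof.
rewrite catA rot_lem -catA /=.
by have := rot_lem _ (y ++ z) [::] k; rewrite cats0 /= => <-.
Qed.

Local Open Scope ring_scope.

Theorem lemma7 (S G : finType) (w : seq S) :
  (1 < #|S|)%N -> (1 < #|G|)%N ->
  (exists (f : S -> seq G) (x : seq G) (r : rat) (a : G),
      [/\ injective (morph f), 1 <= r, is_rpow (morph f w) x r
        & count_mem a x = 1%N]) ->
  EI_infinite G w.
Proof.
move=> _ _ [f [x [r [a [finj r1 [x0 [rx ux]] ca]]]]] M.
set u := morph f w in rx ux.
set n := size u in rx ux.
have xn : (size x <= n)%N.
  rewrite -(ler_nat rat) -rx -{1}(mul1r (size x)%:R).
  by apply: ler_wpM2r.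
set q := (n %/ size x)%N.
set m := (n %% size x)%N.
have q1 : (0 < q)%N by rewrite divn_gt0.
have mx : (m < size x)%N by rewrite ltn_mod.
have ue : u = flatten (nseq q x) ++ take m x.
  by rewrite ux -rpow_dec // -divn_eq.
have [k Mk] : exists k : nat, M < k%:R.
  by exists (Num.bound `|M|); apply: le_lt_trans (ler_norm M) (archi_boundP (normr_ge0 M)).
have ax : a \in x by rewrite -has_pred1 has_count ca.
set i := index a x.
set x1 := take i x. set x2 := drop i.+1 x.
have xe : x = x1 ++ a :: x2.
  by rewrite /x1 /x2 -{1}(cat_take_drop i x) (drop_nth a) ?index_mem // nth_index.
have [a1 a2] : a \notin x1 /\ a \notin x2.
  move: ca; rewrite xe count_cat /= eqxx add1n addnS => /eqP; rewrite eqSS addn_eq0.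
  by case/andP=> /eqP h1 /eqP h2; rewrite -!has_pred1 !has_count h1 h2.
pose p := flatten (nseq k (x2 ++ x1 ++ [:: a])).
have psx : morph (psi _ a p) x = flatten (nseq k.+1 x).
  rewrite {1}xe morph_cat morph_psi_id // mcons morph_psi_id // /psi eqxx.
  have -> : x1 ++ (a :: p) ++ x2 = (x1 ++ [:: a]) ++ p ++ x2 by rewrite -catA.
  by rewrite /p rot2 -[(x1 ++ [:: a]) ++ x2]catA -xe.
have [e pst] : exists e, morph (psi _ a p) (take m x) = flatten (nseq e x) ++ take m x.
  case: (leqP m i) => mi.
    exists 0%N; rewrite morph_psi_id //.
    apply: contra a1; rewrite /x1 -(subnKC mi) takeD.
    by rewrite mem_cat => ->.
  exists k.
  have : take m x = x1 ++ a :: take (m - i).-1 x2.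
    rewrite {1}xe take_cat size_take.
    have : (i < size x)%N by rewrite index_mem.
    move=> isz; rewrite isz ltnNge (ltnW mi) /=.
    case E: (m - i)%N => [|j] //; by move: mi; rewrite -subn_gt0 E.
  move=> ->; rewrite morph_cat morph_psi_id // mcons /psi eqxx.
  rewrite morph_psi_id; last first.
    by apply: contra a2; apply: mem_take.
  set t := take _ x2.
  have -> : x1 ++ (a :: p) ++ t = ((x1 ++ [:: a]) ++ p) ++ t.
    by rewrite -catA -catA.
  rewrite /p rot_lem -catA -[(x1 ++ [:: a]) ++ x2]catA /= -xe -catA //.
set K := (q * k.+1 + e)%N.
have he : morph (psi _ a p) u = flatten (nseq K x) ++ take m x.
  by rewrite ue morph_cat morph_fn psx fnM pst catA -fnD.
have sz : size (morph (psi _ a p) u) = (K * size x + m)%N.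
  by rewrite he size_cat size_fn size_take mx.
exists (fun s => morph (psi _ a p) (f s)), x, ((K * size x + m)%:R / (size x)%:R).
split.
- by move=> s1 s2; rewrite -!morph_comp => /psi_inj /finj.
- rewrite -morph_comp (_ : morph f w = u) // /is_rpow sz; split; first split => //; first split.
  + by rewrite divfK // pnatr_eq0 -lt0n.
  + by rewrite he rpow_dec.
  apply: (lt_le_trans Mk); rewrite ler_pdivlMr ?ltr0n // -natrM ler_nat.
  rewrite (leq_trans _ (leq_addr _ _)) // leq_pmul2r // /K.
  by rewrite (leq_trans _ (leq_addr _ _)) // (leq_trans (leqnSn k)) // leq_pmull.
Qed.
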